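(* Let $(X,d,\kappa)$ be a digital metric space with $X$ finite, and let $T:X\to X$. If $T$ is a digital contraction map, then there exists $\phi\in\Phi$ such that $T$ is $\phi$-contractive. Conversely (with $X$ finite), if $T$ is $\phi$-contractive for some $\phi\in\Phi$, then $T$ is a digital contraction map.
   Context: A digital metric space is a triple $(X,d,\kappa)$ where $X\subset\mathbb{Z}^n$ for some positive integer $n$, $\kappa$ is an adjacency relation on $X$, and $d$ is a metric on $X$. $\Phi$ is the set of functions $\phi:[0,\infty)\to[0,\infty)$ that are increasing, satisfy $\phi(t)=0$ iff $t=0$, and $\phi(t)<t$ for $t>0$. $T$ is $\phi$-contractive if $\phi(d(T(x),T(y)))<\phi(d(x,y))$ for all $x,y\in X$ with $x\ne y$. $T$ is a digital contraction map if there is $\alpha\in(0,1)$ with $d(T(x),T(y))\le\alpha\,d(x,y)$ for all $x,y\in X$. *)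

(* Defs.v *)
From HB Require Import structures.
From mathcomp Require Import all_boot all_order all_algebra.
From mathcomp Require Import finmap.
From mathcomp Require Import reals.
Set Implicit Arguments. Unset Strict Implicit. Unset Printing Implicit Defensive.
Import Order.TTheory GRing.Theory Num.Theory.
Local Open Scope ring_scope.

(* An adjacency relation on X: a symmetric relation (it plays no role in the result). *)
Definition adjacency (T : Type) (kappa : rel T) : Prop := symmetric kappa.

Definition is_metric (R : realFieldType) (T : Type) (d : T -> T -> R) : Prop :=
  [/\ forall x y, 0 <= d x y,
      forall x y, d x y = 0 <-> x = y,
      forall x y, d x y = d y x
    & forall x y z, d x z <= d x y + d y z].

(* Φ : phi : [0,oo) -> [0,oo), increasing, phi t = 0 iff t = 0, phi t < t for t > 0.
   phi is represented as a function R -> R; only its values on [0,oo) matter. *)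
Definition in_Phi (R : realFieldType) (phi : R -> R) : Prop :=
  [/\ forall t, 0 <= t -> 0 <= phi t,
      forall s t, 0 <= s -> s < t -> phi s < phi t,
      forall t, 0 <= t -> (phi t = 0 <-> t = 0)
    & forall t, 0 < t -> phi t < t].

Definition phi_contractive (R : realFieldType) (T : Type) (d : T -> T -> R)
  (phi : R -> R) (f : T -> T) : Prop :=
  forall x y, x <> y -> phi (d (f x) (f y)) < phi (d x y).

Definition digital_contraction (R : realFieldType) (T : Type) (d : T -> T -> R)
  (f : T -> T) : Prop :=
  exists alpha : R, [/\ 0 < alpha, alpha < 1 &
    forall x y, d (f x) (f y) <= alpha * d x y].

(* Main.v *)
Require Import Defs.
From HB Require Import structures.
From mathcomp Require Import all_boot all_order all_algebra.
From mathcomp Require Import finmap.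
From mathcomp Require Import reals.
Import Order.TTheory GRing.Theory Num.Theory.
Local Open Scope ring_scope.

Theorem proposition7p5 (R : realType) (n : nat) (X : {fset 'rV[int]_n})
  (kappa : rel X) (d : X -> X -> R) (T : X -> X) :
  adjacency kappa -> is_metric d ->
  (digital_contraction d T -> exists phi : R -> R, in_Phi phi /\ phi_contractive d phi T) /\
  (forall phi : R -> R, in_Phi phi -> phi_contractive d phi T -> digital_contraction d T).
Proof.
move=> _ [d0 dE dS dT]; split.
  move=> [a [a0 a1 Ha]]; exists (fun t => t / 2); split.
    split.
    - by move=> t t0; rewrite divr_ge0.
    - by move=> s t _ st; rewrite ltr_pM2r // invr_gt0.
    - move=> t _; split; last by move=> ->; rewrite mul0r.
      by move/eqP; rewrite mulf_eq0 invr_eq0 pnatr_eq0 orbF => /eqP.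
    - by move=> t t0; rewrite ltr_pdivrMr // ltr_pMr // ltr1n.
  move=> x y xy; rewrite ltr_pM2r ?invr_gt0 //.
  have dxy : 0 < d x y by rewrite lt_neqAle d0 andbT eq_sym; apply/negP => /eqP/dE.
  apply: (le_lt_trans (Ha x y)); by rewrite gtr_pMl.
move=> phi [p0 pinc pz plt] Hc.
have Hlt : forall x y, x <> y -> d (T x) (T y) < d x y.
  move=> x y xy; rewrite ltNge; apply/negP; rewrite le_eqVlt => /orP[/eqP E|E].
    by have := Hc x y xy; rewrite E ltxx.
  by have := lt_trans (Hc x y xy) (pinc _ _ (d0 x y) E); rewrite ltxx.
pose F := fun p : X * X => d (T p.1) (T p.2) / d p.1 p.2.
exists (\big[Order.max/(2^-1 : R)]_(p : X * X | p.1 != p.2) F p); split.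
- apply: lt_le_trans (bigmax_ge_id _ _ _ _); by rewrite invr_gt0 ltr0n.
- apply: bigmax_lt; first by rewrite invf_lt1 // ltr1n.
  move=> [x y] /= /eqP xy; rewrite /F /=.
  have dxy : 0 < d x y by rewrite lt_neqAle d0 andbT eq_sym; apply/negP => /eqP/dE.
  by rewrite ltr_pdivrMr // mul1r; apply: Hlt.
- move=> x y; case: (eqVneq x y) => [->|xy].
    by rewrite (proj2 (dE (T y) (T y)) erefl) (proj2 (dE y y) erefl) mulr0.
  have dxy : 0 < d x y by rewrite lt_neqAle d0 andbT eq_sym; apply/negP => /eqP/dE; apply/eqP.
  rewrite -ler_pdivrMr //.
  by apply: (@le_bigmax_cond _ _ _ _ (x, y) (fun p : X * X => p.1 != p.2) F).
Qed.
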